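(* Let $M,N\in\mathbb{S}^{q+r}$. If there exist scalars $\alpha\in\mathbb{R}$ and $\beta>0$ such that $M-\alpha N\ge\begin{bmatrix}\beta I_q&0\\0&0\end{bmatrix}$ ( * ), then $\mathcal{Z}_r^0(N)\subseteq\mathcal{Z}_r^+(M)$. Moreover, if $N\in\boldsymbol{\Pi}_{q,r}$, $N\mid N_{22}=0$ and $M_{22}\le 0$, then $\mathcal{Z}_r^0(N)\subseteq\mathcal{Z}_r^+(M)$ if and only if there exist $\alpha\ge 0$ and $\beta>0$ such that ( * ) holds.
   Context: $\mathbb{S}^k$ denotes the real symmetric $k\times k$ matrices; for symmetric matrices, $A\ge 0$ ($A>0$) means positive semidefinite (definite), $A\le B$ means $B-A\ge0$. $A^\dagger$ is the Moore–Penrose pseudo-inverse. Any $\Pi\in\mathbb{S}^{q+r}$ (in particular $M,N$) is partitioned as $\Pi=\begin{bmatrix}\Pi_{11}&\Pi_{12}\\ \Pi_{21}&\Pi_{22}\end{bmatrix}$ with $\Pi_{11}\in\mathbb{S}^q$, $\Pi_{22}\in\mathbb{S}^r$. The generalized Schur complement is $\Pi\mid\Pi_{22}:=\Pi_{11}-\Pi_{12}\Pi_{22}^\dagger\Pi_{21}$. The set $\boldsymbol{\Pi}_{q,r}$ consists of all $\Pi\in\mathbb{S}^{q+r}$ with $\Pi_{22}\le 0$, $\Pi\mid\Pi_{22}\ge 0$ and $\ker\Pi_{22}\subseteq\ker\Pi_{12}$. Define $\mathcal{Z}_r^+(\Pi)=\{Z\in\mathbb{R}^{r\times q}:\begin{bmatrix}I_q\\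 Z\end{bmatrix}^\top\Pi\begin{bmatrix}I_q\\ Z\end{bmatrix}> 0\}$ and $\mathcal{Z}_r^0(\Pi)$ the same with $=0$. *)

(* Defs.v *)
From HB Require Import structures.
From mathcomp Require Import all_boot all_order all_algebra.
From mathcomp Require Import reals.
From Stdlib Require Import ClassicalEpsilon.
Set Implicit Arguments. Unset Strict Implicit. Unset Printing Implicit Defensive.
Import Order.TTheory GRing.Theory Num.Theory.
Local Open Scope ring_scope.

Section Defs.
Variable R : realType.

Definition symmx n (A : 'M[R]_n) : Prop := A^T = A.

Definition qform n (A : 'M[R]_n) (x : 'cV[R]_n) : R := (x^T *m A *m x) 0 0.

Definition psdmx n (A : 'M[R]_n) : Prop := forall x, 0 <= qform A x.
Definition pdmx n (A : 'M[R]_n) : Prop := forall x, x != 0 -> 0 < qform A x.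

Definition lemx n (A B : 'M[R]_n) : Prop := psdmx (B - A).

(* Moore--Penrose pseudo-inverse: the (unique, existing) matrix satisfying
   the four Penrose equations; chosen by classical choice. *)
Definition is_pinv m n (A : 'M[R]_(m, n)) (X : 'M[R]_(n, m)) : Prop :=
  [/\ A *m X *m A = A, X *m A *m X = X,
      (A *m X)^T = A *m X & (X *m A)^T = X *m A].

Definition pinvmx m n (A : 'M[R]_(m, n)) : 'M[R]_(n, m) :=
  epsilon (inhabits 0) (is_pinv A).

(* Partition of Pi in S^(q+r):  Pi11 = ulsubmx, Pi12 = ursubmx,
   Pi21 = dlsubmx, Pi22 = drsubmx.  Generalized Schur complement Pi | Pi22. *)
Definition schurmx q r (P : 'M[R]_(q + r)) : 'M[R]_q :=
  ulsubmx P - ursubmx P *m pinvmx (drsubmx P) *m dlsubmx P.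

Definition PiSet q r (P : 'M[R]_(q + r)) : Prop :=
  [/\ symmx P,
      lemx (drsubmx P) 0,
      psdmx (schurmx P)
    & forall x : 'cV[R]_r, drsubmx P *m x = 0 -> ursubmx P *m x = 0].

Definition IZ q r (Z : 'M[R]_(r, q)) : 'M[R]_(q + r, q) := col_mx 1%:M Z.

Definition Zplus q r (P : 'M[R]_(q + r)) : 'M[R]_(r, q) -> Prop :=
  fun Z => pdmx ((IZ Z)^T *m P *m IZ Z).
Definition Zzero q r (P : 'M[R]_(q + r)) : 'M[R]_(r, q) -> Prop :=
  fun Z => (IZ Z)^T *m P *m IZ Z = 0.

Definition starcond q r (M N : 'M[R]_(q + r)) (alpha beta : R) : Prop :=
  lemx (block_mx (beta%:M : 'M[R]_q) 0 0 (0 : 'M[R]_r)) (M - alpha *: N).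

End Defs.

(* Main.v *)
Require Import Defs.
From HB Require Import structures.
From mathcomp Require Import all_boot all_order all_algebra.
From mathcomp Require Import reals.
From mathcomp Require Import ring lra.
From Stdlib Require Import ClassicalEpsilon.
Import Order.TTheory GRing.Theory Num.Theory.
Local Open Scope ring_scope.



Section Pinv.
Variable R : realType.

Lemma mmT_eq0 p m (B : 'M[R]_(p, m)) : B *m B^T = 0 -> B = 0.
Proof.
move=> H; apply/matrixP => i j; rewrite mxE.
have /matrixP /(_ i i) := H; rewrite !mxE => Hs.
have Hs' : \sum_(k < m) B i k ^+ 2 = 0.
  by rewrite -[RHS]Hs; apply: eq_bigr => k _; rewrite mxE expr2.
have : B i j ^+ 2 = 0 by apply: (psumr_eq0P _ Hs') => // k _; exact: sqr_ge0.
by move=> /eqP; rewrite sqrf_eq0 => /eqP.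
Qed.

Lemma gram_unit (k m : nat) (F : 'M[R]_(k, m)) : row_free F -> F *m F^T \in unitmx.
Proof.
move=> fF; rewrite -row_free_unit -kermx_eq0; apply/eqP.
set V := kermx _.
have H0 : V *m (F *m F^T) = 0 by apply: mulmx_ker.
have : (V *m F) *m (V *m F)^T = 0.
  have -> : (V *m F) *m (V *m F)^T = V *m (F *m F^T) *m V^T by rewrite trmx_mul !mulmxA.
  by rewrite H0 mul0mx.
move/mmT_eq0 => /eqP; by rewrite mulmx_free_eq0 // => /eqP.
Qed.

Lemma pinv_fact m n k (F : 'M[R]_(m, k)) (G : 'M[R]_(k, n)) :
  row_free G -> row_free F^T -> exists X, is_pinv (F *m G) X.
Proof.
move=> fG fFt.
have uG := gram_unit _ _ _ fG.
have uF : F^T *m F \in unitmx by have := gram_unit _ _ _ fFt; rewrite trmxK.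
set iG := invmx (G *m G^T); set iF := invmx (F^T *m F).
exists (G^T *m iG *m iF *m F^T).
have iGT : iG^T = iG by rewrite /iG trmx_inv trmx_mul trmxK.
have iFT : iF^T = iF by rewrite /iF trmx_inv trmx_mul trmxK.
have AX : (F *m G) *m (G^T *m iG *m iF *m F^T) = F *m iF *m F^T.
  by rewrite !mulmxA -(mulmxA F G) -(mulmxA F) mulmxV // mulmx1.
have XA : (G^T *m iG *m iF *m F^T) *m (F *m G) = G^T *m iG *m G.
  by rewrite !mulmxA -(mulmxA _ F^T F) -(mulmxA _ iF) mulVmx // mulmx1.
split.
- by rewrite AX !mulmxA -(mulmxA _ F^T F) -(mulmxA F iF) mulVmx // mulmx1.
- rewrite XA !mulmxA -[G^T *m iG *m G *m G^T]mulmxA -[G^T *m iG *m (G *m G^T) *m iG]mulmxA.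
  by rewrite mulmxV // mulmx1.
- by rewrite AX !trmx_mul trmxK iFT mulmxA.
- by rewrite XA !trmx_mul trmxK iGT mulmxA.
Qed.

Lemma pinv_exists m n (A : 'M[R]_(m, n)) : exists X, is_pinv A X.
Proof.
rewrite -(mulmx_base A); apply: pinv_fact; first exact: row_base_free.
by rewrite /row_free mxrank_tr; have := col_base_full A; rewrite /row_full.
Qed.

Lemma pinvmxP m n (A : 'M[R]_(m, n)) : is_pinv A (Defs.pinvmx A).
Proof.
rewrite /Defs.pinvmx; apply: epsilon_spec; exact: pinv_exists.
Qed.
End Pinv.



Section QF.
Local Set Implicit Arguments.
Local Unset Strict Implicit.
Variable R : realType.

Definition bf m n (E : 'M[R]_(m, n)) (x : 'cV[R]_m) (u : 'cV[R]_n) : R :=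
  (x^T *m E *m u) 0 0.
Definition nsq m (x : 'cV[R]_m) : R := (x^T *m x) 0 0.
Definition cE m n (E : 'M[R]_(m, n)) : R := \sum_j \sum_i `|E i j|.

Lemma bf_sum m n (E : 'M[R]_(m, n)) x u :
  bf E x u = \sum_j \sum_i x i 0 * E i j * u j 0.
Proof.
rewrite /bf mxE; apply: eq_bigr => j _; rewrite mxE mulr_suml.
by apply: eq_bigr => i _; rewrite mxE.
Qed.

Lemma nsq_sum m (x : 'cV[R]_m) : nsq x = \sum_i x i 0 ^+ 2.
Proof. by rewrite /nsq mxE; apply: eq_bigr => i _; rewrite mxE expr2. Qed.

Lemma nsq_ge0 m (x : 'cV[R]_m) : 0 <= nsq x.
Proof. by rewrite nsq_sum; apply: sumr_ge0 => i _; apply: sqr_ge0. Qed.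

Lemma nsq_ge_coord m (x : 'cV[R]_m) i : x i 0 ^+ 2 <= nsq x.
Proof.
rewrite nsq_sum (bigD1 i) //= lerDl; apply: sumr_ge0 => k _; exact: sqr_ge0.
Qed.

Lemma nsq_gt0 m (x : 'cV[R]_m) : x != 0 -> 0 < nsq x.
Proof.
move=> nz; rewrite lt_neqAle nsq_ge0 andbT; apply/eqP => H.
move/eqP: nz; apply; apply/matrixP => i j; rewrite (ord1 j) mxE.
have : x i 0 ^+ 2 = 0.
  have Hs : \sum_i x i 0 ^+ 2 = 0 by rewrite -nsq_sum H.
  by apply: (psumr_eq0P _ Hs) => // k _; exact: sqr_ge0.
by move/eqP; rewrite sqrf_eq0 => /eqP.
Qed.

Lemma amgm (t a b : R) : 0 < t -> 2 * (`|a| * `|b|) <= t * a ^+ 2 + b ^+ 2 / t.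
Proof.
move=> t0.
have ha : a ^+ 2 = `|a| ^+ 2 by rewrite real_normK ?num_real.
have hb : b ^+ 2 = `|b| ^+ 2 by rewrite real_normK ?num_real.
rewrite ha hb.
have : 0 <= (t * `|a| - `|b|) ^+ 2 / t by apply: divr_ge0; [exact: sqr_ge0|exact: ltW].
have -> : (t * `|a| - `|b|) ^+ 2 / t = t * `|a| ^+ 2 + `|b| ^+ 2 / t - 2 * (`|a| * `|b|).
  by field; rewrite gt_eqF.
by rewrite subr_ge0.
Qed.

Lemma crude m n (E : 'M[R]_(m, n)) x u t : 0 < t ->
  2 * `|bf E x u| <= cE E * (t * nsq x + nsq u / t).
Proof.
move=> t0; rewrite bf_sum /cE mulr_suml.
apply: (@le_trans _ _ (2 * \sum_j \sum_i `|x i 0 * E i j * u j 0|)).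
  rewrite ler_pM2l //; apply: le_trans (ler_norm_sum _ _ _) _.
  by apply: ler_sum => j _; exact: ler_norm_sum.
rewrite mulr_sumr; apply: ler_sum => j _; rewrite mulr_sumr mulr_suml.
apply: ler_sum => i _.
rewrite !normrM.
have -> : 2 * (`|x i 0| * `|E i j| * `|u j 0|) = `|E i j| * (2 * (`|x i 0| * `|u j 0|)).
  by ring.
apply: ler_wpM2l => //; apply: le_trans (amgm _ _ t0) _.
apply: lerD; first by apply: ler_wpM2l; [exact: ltW|exact: nsq_ge_coord].
by apply: ler_wpM2r; [rewrite invr_ge0; exact: ltW|exact: nsq_ge_coord].
Qed.


Lemma bf_trE m n (E : 'M[R]_(m, n)) x u : bf E x u = bf E^T u x.
Proof.
rewrite /bf; transitivity ((x^T *m E *m u)^T 0 0); first by rewrite [RHS]mxE.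
by rewrite !trmx_mul trmxK mulmxA.
Qed.

Lemma bf_sym n (S : 'M[R]_n) x u : symmx S -> bf S x u = bf S u x.
Proof. by move=> sS; rewrite bf_trE sS. Qed.

Lemma bfDl m n (E : 'M[R]_(m, n)) x y u : bf E (x + y) u = bf E x u + bf E y u.
Proof. by rewrite /bf linearD /= !mulmxDl mxE. Qed.
Lemma bfDr m n (E : 'M[R]_(m, n)) x u v : bf E x (u + v) = bf E x u + bf E x v.
Proof. by rewrite /bf !mulmxDr mxE. Qed.
Lemma bfZl m n (E : 'M[R]_(m, n)) c x u : bf E (c *: x) u = c * bf E x u.
Proof. by rewrite /bf linearZ /= -!scalemxAl mxE. Qed.
Lemma bfZr m n (E : 'M[R]_(m, n)) c x u : bf E x (c *: u) = c * bf E x u.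
Proof. by rewrite /bf -!scalemxAr mxE. Qed.
Lemma bfDm m n (E F : 'M[R]_(m, n)) x u : bf (E + F) x u = bf E x u + bf F x u.
Proof. by rewrite /bf mulmxDr mulmxDl mxE. Qed.
Lemma bfZm m n (E : 'M[R]_(m, n)) c x u : bf (c *: E) x u = c * bf E x u.
Proof. by rewrite /bf -scalemxAr -scalemxAl mxE. Qed.
Lemma bfNm m n (E : 'M[R]_(m, n)) x u : bf (- E) x u = - bf E x u.
Proof. by rewrite -scaleN1r bfZm mulN1r. Qed.
Lemma bfBm m n (E F : 'M[R]_(m, n)) x u : bf (E - F) x u = bf E x u - bf F x u.
Proof. by rewrite bfDm bfNm. Qed.
Lemma bf_mul m n k l (C : 'M[R]_(m, k)) (E : 'M[R]_(m, n)) (D : 'M[R]_(n, l)) x u :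
  bf (C^T *m E *m D) x u = bf E (C *m x) (D *m u).
Proof. by rewrite /bf trmx_mul !mulmxA. Qed.
Lemma bf_delta m n (E : 'M[R]_(m, n)) i u : bf E (delta_mx i 0) u = (E *m u) i 0.
Proof. by rewrite /bf trmx_delta -mulmxA -rowE mxE. Qed.
Lemma qformE n (S : 'M[R]_n) x : qform S x = bf S x x.
Proof. by []. Qed.

Lemma qexp n (S : 'M[R]_n) a b c d : symmx S ->
  bf S (c *: a + d *: b) (c *: a + d *: b) =
  c ^+ 2 * bf S a a + 2 * c * d * bf S a b + d ^+ 2 * bf S b b.
Proof.
move=> sS; rewrite !bfDl !bfDr !bfZl !bfZr (@bf_sym _ S b a sS); ring.
Qed.

Lemma CS n (S : 'M[R]_n) a b : symmx S -> psdmx S ->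
  bf S a b ^+ 2 <= bf S a a * bf S b b.
Proof.
move=> sS pS.
have H c d : 0 <= c ^+ 2 * bf S a a + 2 * c * d * bf S a b + d ^+ 2 * bf S b b.
  by rewrite -qexp //; apply: pS.
have qb0 : 0 <= bf S b b by apply: pS.
have qa0 : 0 <= bf S a a by apply: pS.
set qa := bf S a a in H qa0 *; set qb := bf S b b in H qb0 *; set k := bf S a b in H *.
have [qbp|] := ltP 0 qb.
  have := H qb (- k); nra.
rewrite le_eqVlt ltNge qb0 orbF => /eqP qbz; rewrite qbz in H *.
have [kz|kn] := eqVneq k 0; first by rewrite kz expr0n mulr0.
have := H 1 (- (qa + 1) / (2 * k)).
have -> : 2 * 1 * (- (qa + 1) / (2 * k)) * k = - (qa + 1) by field; rewrite kn.
lra.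
Qed.

Lemma psd_ker n (S : 'M[R]_n) w : symmx S -> psdmx S -> qform S w = 0 -> S *m w = 0.
Proof.
move=> sS pS qw; apply/matrixP => i j; rewrite (ord1 j) [RHS]mxE -bf_delta.
have := CS (delta_mx i 0) w sS pS; rewrite -[bf S w w]qformE qw mulr0 => h.
by apply/eqP; rewrite -sqrf_eq0 eq_le h sqr_ge0.
Qed.

Lemma qdelta n (S : 'M[R]_n) i : bf S (delta_mx i 0) (delta_mx i 0) = S i i.
Proof. by rewrite bf_delta -colE mxE. Qed.

Lemma nsqS n (S : 'M[R]_n) w : symmx S -> psdmx S ->
  nsq (S *m w) <= \tr S * qform S w.
Proof.
move=> sS pS; rewrite nsq_sum /mxtrace mulr_suml; apply: ler_sum => i _.
rewrite -bf_delta -(qdelta S i); exact: CS.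
Qed.


Lemma cE_ge0 m n (E : 'M[R]_(m, n)) : 0 <= cE E.
Proof. by apply: sumr_ge0 => j _; apply: sumr_ge0 => i _. Qed.

Lemma crude1 n (E : 'M[R]_n) x : bf E x x <= cE E * nsq x.
Proof.
have := crude E x x ltr01; rewrite mul1r divr1 => h.
have : 2 * bf E x x <= 2 * (cE E * nsq x).
  apply: le_trans (ler_wpM2l _ (ler_norm _)) _ => //.
  apply: le_trans h _. lra.
by rewrite ler_pM2l.
Qed.

Lemma bf0l m n (E : 'M[R]_(m, n)) u : bf E 0 u = 0.
Proof. by rewrite -(scale0r (0 : 'cV_m)) bfZl mul0r. Qed.

Lemma pd_psd n (A : 'M[R]_n) : pdmx A -> psdmx A.
Proof.
move=> pA x; have [->|nz] := eqVneq x 0; first by rewrite qformE bf0l.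
exact/ltW/pA.
Qed.

Lemma pd_unit n (A : 'M[R]_n) : symmx A -> pdmx A -> A \in unitmx.
Proof.
move=> sA pA; rewrite unitmxE unitfE; apply/negP => /det0P [v nz vA].
have : 0 < qform A v^T by apply: pA; rewrite trmx_eq0.
by rewrite qformE /bf trmxK vA mul0mx mxE ltxx.
Qed.

Lemma pd_lb n (A : 'M[R]_n) : symmx A -> pdmx A ->
  exists lam, 0 < lam /\ forall x, lam * nsq x <= qform A x.
Proof.
move=> sA pA; have uA := pd_unit sA pA; have psA := pd_psd pA.
set Y := invmx A; set c := cE Y^T.
have c0 : 0 <= c by apply: cE_ge0.
exists (c + 1)^-1; split; first by rewrite invr_gt0; lra.
move=> x; rewrite mulrC ler_pdivrMr; last by lra.
have e1 : bf A x (Y *m x) = nsq x by rewrite /bf /nsq mulmxA -(mulmxA _ A) mulmxV // mulmx1.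
have e2 : bf A (Y *m x) (Y *m x) = bf Y^T x x.
  by rewrite -bf_mul -mulmxA mulmxV // mulmx1.
have h := CS x (Y *m x) sA psA; rewrite e1 e2 in h.
have hb : bf Y^T x x <= c * nsq x by apply: crude1.
have hb0 : 0 <= bf Y^T x x by rewrite -e2; apply: psA.
have ha : 0 <= qform A x by apply: psA.
have hs := nsq_ge0 x.
rewrite qformE in ha *.
set a := bf A x x in h ha *; set s := nsq x in h hb hs *; set b := bf Y^T x x in h hb hb0.
have [s0|sp] := eqVneq s 0; first by rewrite s0; nra.
have sp' : 0 < s by rewrite lt_neqAle eq_sym sp hs.
have : s * s <= s * (a * c) by nra.
rewrite ler_pM2l // => h2; nra.
Qed.

End QF.



Section Blocks.
Local Set Implicit Arguments.
Local Unset Strict Implicit.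
Variable R : realType.
Variables q r : nat.

Definition Umx : 'M[R]_(q, q + r) := row_mx 1%:M 0.
Definition Emx : 'M[R]_(q + r, r) := col_mx 0 1%:M.

Lemma Dfact (be : R) :
  block_mx (be%:M : 'M_q) 0 0 (0 : 'M_r) = Umx^T *m be%:M *m Umx.
Proof.
rewrite /Umx tr_row_mx trmx1 trmx0 mul_col_mx mul0mx mul_col_row.
by rewrite mul1mx !mulmx0 mul0mx mulmx1.
Qed.

Lemma Umx_v (v : 'cV[R]_(q + r)) : Umx *m v = usubmx v.
Proof. by rewrite -{1}[v]vsubmxK /Umx mul_row_col mul1mx mul0mx addr0. Qed.

Lemma bf_D be (v : 'cV[R]_(q + r)) :
  bf (block_mx (be%:M : 'M_q) 0 0 (0 : 'M_r)) v v = be * nsq (usubmx v).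
Proof. by rewrite Dfact bf_mul Umx_v /bf mul_mx_scalar -scalemxAl mxE. Qed.

Lemma IZx (Z : 'M[R]_(r, q)) (x : 'cV[R]_q) : IZ Z *m x = col_mx x (Z *m x).
Proof. by rewrite /IZ mul_col_mx mul1mx. Qed.

Lemma UIZ (Z : 'M[R]_(r, q)) : Umx *m IZ Z = 1%:M.
Proof. by rewrite /Umx /IZ mul_row_col mul1mx mul0mx addr0. Qed.

Lemma Emx_w (w : 'cV[R]_r) : Emx *m w = col_mx 0 w.
Proof. by rewrite /Emx mul_col_mx mul0mx mul1mx. Qed.

Lemma EME (M : 'M[R]_(q + r)) : Emx^T *m M *m Emx = drsubmx M.
Proof.
rewrite /Emx tr_col_mx trmx0 trmx1 -{1}[M]submxK mul_row_block.
by rewrite !mul0mx !mul1mx !add0r mul_row_col mulmx0 add0r mulmx1.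
Qed.

End Blocks.



Section Misc.
Local Set Implicit Arguments.
Local Unset Strict Implicit.
Variable R : realType.

Lemma quad (a b c : R) : 0 < a -> c <= 0 ->
  (forall t, 0 < a + 2 * t * b + t ^+ 2 * c) -> c = 0 /\ b = 0.
Proof.
move=> a0 c0 H.
have cz : c = 0.
  apply/eqP; rewrite eq_le c0 /=; rewrite leNgt; apply/negP => cn.
  set d := - c.
  have d0 : 0 < d by rewrite /d oppr_gt0.
  set t := a / d + 1.
  have t1 : 1 <= t by rewrite /t lerDr divr_ge0 // ltW.
  have td : t * d = a + d by rewrite /t; field; rewrite gt_eqF.
  have h1 := H t; have h2 := H (- t).
  have cd : c = - d by rewrite /d opprK.
  rewrite cd in h1 h2; nra.
split => //; apply/eqP; apply/negPn/negP => bn.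
have := H (- a / (2 * b)); rewrite cz mulr0 addr0.
have -> : 2 * (- a / (2 * b)) * b = - a by field; rewrite bn.
lra.
Qed.

Lemma ker_lift m n k (A : 'M[R]_(m, n)) (B : 'M[R]_(k, n)) :
  (forall x : 'cV[R]_n, A *m x = 0 -> B *m x = 0) ->
  forall p (Y : 'M[R]_(n, p)), A *m Y = 0 -> B *m Y = 0.
Proof.
move=> H p Y AY; apply/matrixP => i j.
have := H (col j Y); rewrite colE mulmxA AY mul0mx => /(_ erefl).
rewrite mulmxA -colE => /matrixP /(_ i 0); rewrite !mxE => ->; exact: (sym_equal (mxE _ _ _ _ _)) || reflexivity.
Qed.

Lemma bf_kr n m (E : 'M[R]_(n, m)) x d : E *m d = 0 -> bf E x d = 0.
Proof. by move=> h; rewrite /bf -mulmxA h mulmx0 mxE. Qed.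

Lemma nsqN n (u : 'cV[R]_n) : nsq (- u) = nsq u.
Proof. by rewrite /nsq (raddfN (@trmx R n 1)) mulNmx mulmxN opprK. Qed.

Lemma tr_psd_ge0 n (S : 'M[R]_n) : psdmx S -> 0 <= \tr S.
Proof. by move=> pS; apply: sumr_ge0 => i _; rewrite -qdelta; apply: pS. Qed.

End Misc.



Lemma bf0m (R : realType) m n (x : 'cV[R]_m) (u : 'cV[R]_n) : bf 0 x u = 0.
Proof. by rewrite /bf mulmx0 mul0mx mxE. Qed.

Theorem mainTheorem12 (R : realType) (q r : nat) (M N : 'M[R]_(q + r)) :
  (0 < q)%N -> symmx M -> symmx N ->
  ((exists alpha beta : R, 0 < beta /\ starcond M N alpha beta) ->
     forall Z, Zzero N Z -> Zplus M Z)
  /\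
  (PiSet N -> schurmx N = 0 -> lemx (drsubmx M) 0 ->
     ((forall Z, Zzero N Z -> Zplus M Z) <->
      exists alpha beta : R, [/\ 0 <= alpha, 0 < beta & starcond M N alpha beta])).
Proof.
move=> q0 sM sN.
have part1 : (exists alpha beta : R, 0 < beta /\ starcond M N alpha beta) ->
     forall Z, Zzero N Z -> Zplus M Z.
  move=> [al [be [be0 st]]] Z zZ x xnz.
  rewrite qformE bf_mul.
  have h := st (IZ Z *m x).
  rewrite qformE !bfBm bfZm bf_D [in usubmx _]IZx col_mxKu in h.
  have hN : bf N (IZ Z *m x) (IZ Z *m x) = 0 by rewrite -bf_mul zZ bf0m.
  rewrite hN in h; have := nsq_gt0 xnz; nra.
split => //.
move=> [_ nP22 _ kerN] sch nM22.
split; last by move=> [al [be [_ be0 st]]]; apply: part1; exists al, be.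
move=> Hz.
set P := drsubmx N; set X := Defs.pinvmx P.
have [pXP _ _ _] := @pinvmxP _ _ _ P.
have PT : P^T = P by rewrite /P trmx_drsub sN.
have N12T : (ursubmx N)^T = dlsubmx N by rewrite trmx_ursub sN.
have N11T : (ulsubmx N)^T = ulsubmx N by rewrite trmx_ulsub sN.
have N12XP : ursubmx N *m X *m P = ursubmx N.
  have h := ker_lift kerN (Y := 1%:M - X *m P).
  have : P *m (1%:M - X *m P) = 0 by rewrite mulmxBr mulmx1 mulmxA pXP subrr.
  move/h; rewrite mulmxBr mulmx1 mulmxA => /eqP; rewrite subr_eq0 => /eqP <-.
  done.
set K := X^T *m dlsubmx N.
have PK : P *m K = dlsubmx N.
  by rewrite /K -N12T mulmxA -{1}PT -!trmx_mul mulmxA N12XP.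
have KP : K^T *m P = ursubmx N by rewrite -{1}PT -trmx_mul PK -N12T trmxK.
have N11e : ulsubmx N = ursubmx N *m K.
  have : ulsubmx N = ursubmx N *m X *m dlsubmx N.
    by apply/eqP; rewrite -subr_eq0; apply/eqP; exact: sch.
  move=> Heq; rewrite -N11T Heq /K !trmx_mul -N12T trmxK mulmxA.
  done.
set G := row_mx K (1%:M : 'M[R]_r).
have NG : N = G^T *m P *m G.
  rewrite /G tr_row_mx trmx1 mul_col_mx mul1mx mul_col_row mulmx1 KP PK -N11e.
  by rewrite mulmx1 /P submxK.
have GIZ Z : G *m IZ Z = K + Z by rewrite /G /IZ mul_row_col mulmx1 mul1mx.
have zcrit Z : P *m (K + Z) = 0 -> Zzero N Z.
  move=> h; rewrite /Zzero.
  have -> : (IZ Z)^T *m N *m IZ Z = (G *m IZ Z)^T *m P *m (G *m IZ Z).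
    by rewrite {1}NG trmx_mul !mulmxA.
  by rewrite GIZ -mulmxA h mulmx0.
set Z0 := - K.
have zZ0 : Zzero N Z0 by apply: zcrit; rewrite /Z0 subrr mulmx0.
set A := (IZ Z0)^T *m M *m IZ Z0.
have sA : symmx A by rewrite /symmx /A !trmx_mul trmxK sM mulmxA.
have [lam [lam0 Hlam]] := pd_lb sA (Hz Z0 zZ0).
set E := Emx R q r.
set B := (IZ Z0)^T *m M *m E.
set M22 := drsubmx M.
have EME' : E^T *m M *m E = M22 by apply: EME.
have sM22 : symmx M22 by rewrite /symmx /M22 trmx_drsub sM.
have sM22n : symmx (0 - M22).
  rewrite /symmx; apply/matrixP => i j; rewrite !mxE.
  by move/matrixP: sM => /(_ (rshift q j) (rshift q i)); rewrite mxE => <-.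
have expM x w : bf M (IZ Z0 *m x + E *m w) (IZ Z0 *m x + E *m w) =
    bf A x x + 2 * bf B x w + bf M22 w w.
  have e := qexp (IZ Z0 *m x) (E *m w) 1 1 sM.
  rewrite !scale1r in e; rewrite e -!bf_mul -/A -/B EME'; ring.
have x0nz : (delta_mx (Ordinal q0) 0 : 'cV[R]_q) != 0.
  apply/negP => /eqP/matrixP/(_ (Ordinal q0) 0); rewrite !mxE !eqxx /= => /eqP.
  by rewrite oner_eq0.
have KF w : P *m w = 0 -> M22 *m w = 0 /\ forall x, bf B x w = 0.
  move=> Pw.
  have key x t : x != 0 -> 0 < bf A x x + 2 * t * bf B x w + t ^+ 2 * bf M22 w w.
    move=> xnz; set Z := Z0 + (t / nsq x) *: (w *m x^T).
    have zZ : Zzero N Z.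
      apply: zcrit; rewrite /Z /Z0 addrA subrr add0r -scalemxAr mulmxA Pw mul0mx.
      by rewrite scaler0.
    have := Hz Z zZ x xnz; rewrite qformE bf_mul.
    have -> : IZ Z *m x = IZ Z0 *m x + E *m (t *: w).
      rewrite !IZx /E Emx_w add_col_mx addr0 /Z mulmxDl -scalemxAl -mulmxA.
      rewrite [x^T *m x]mx11_scalar mul_mx_scalar scalerA -/(nsq x) divfK //.
      by rewrite gt_eqF // nsq_gt0.
    rewrite expM bfZr bfZl bfZr => h.
    apply: (lt_le_trans h); rewrite le_eqVlt; apply/orP; left; apply/eqP; ring.
  have c0 : bf M22 w w <= 0.
    by have := nM22 w; rewrite qformE bfBm bf0m sub0r oppr_ge0.
  have [cz _] := quad (Hz Z0 zZ0 _ x0nz) c0 (key _ ^~ x0nz).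
  split.
    have := psd_ker sM22n nM22 (w := w); rewrite qformE bfBm bf0m cz subrr.
    by move/(_ erefl); rewrite mulmxBl mul0mx sub0r => /eqP; rewrite oppr_eq0 => /eqP.
  move=> x; have [->|xnz] := eqVneq x 0; first exact: bf0l.
  by have [_ ->] := quad (Hz Z0 zZ0 _ xnz) c0 (key _ ^~ xnz).
set S := 0 - P.
have pS : psdmx S := nP22.
have sS : symmx S.
  rewrite /symmx; apply/matrixP => i j; rewrite !mxE.
  by move/matrixP: sN => /(_ (rshift q j) (rshift q i)); rewrite mxE => <-.
set tau := \tr S.
have tau0 : 0 <= tau by apply: tr_psd_ge0.
set BX := B *m X. set c1 := cE BX + 1.
have c10 : 0 < c1 by rewrite /c1; have := cE_ge0 BX; lra.
set Q := X^T *m M22 *m X. set c2 := cE (- Q).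
have c20 : 0 <= c2 by apply: cE_ge0.
set t0 := lam / (2 * c1).
have t00 : 0 < t0 by rewrite /t0 divr_gt0 // mulr_gt0.
set Kc := 2 * c1 ^+ 2 / lam.
have Kc0 : 0 <= Kc by rewrite /Kc; apply: divr_ge0; [apply: mulr_ge0 => //; exact: sqr_ge0|exact: ltW].
exists ((Kc + c2) * tau), (lam / 2); split.
- by apply: mulr_ge0 => //; apply: addr_ge0.
- by apply: divr_gt0.
move=> v; rewrite qformE !bfBm bfZm bf_D.
set x := usubmx v; set w := G *m v; set u := P *m w; set w' := X *m u.
set d := w - w'.
have Gv : G *m v = K *m x + dsubmx v by rewrite -{1}[v]vsubmxK /G mul_row_col mul1mx.
have dec : v = IZ Z0 *m x + E *m w.
  rewrite IZx /E Emx_w add_col_mx addr0 /Z0 mulNmx /w Gv addKr.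
  by rewrite /x vsubmxK.
have Pd : P *m d = 0 by rewrite /d mulmxBr /w' /u !mulmxA pXP subrr.
have [M22d Bd] := KF d Pd.
have ew : w = w' + d by rewrite /d addrC subrK.
clearbody d.
have hv : bf M v v = bf A x x + 2 * bf BX x u + bf Q u u.
  rewrite {1 2}dec expM ew bfDr (Bd x) addr0 !bfDl !bfDr.
  rewrite (bf_kr _ M22d) (bf_kr _ M22d) (bf_sym _ _ sM22) (bf_kr _ M22d) !addr0.
  by rewrite /Q bf_mul /w' /BX /bf !mulmxA.
have hN : bf N v v = bf P w w by rewrite {1}NG bf_mul.
have hA := Hlam x.
have hB := crude BX x u t00.
have hQ := crude1 (- Q) u; rewrite bfNm in hQ.
have hS := nsqS w sS pS.
have Sw : S *m w = - u by rewrite /S mulmxBl mul0mx sub0r.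
have eS : bf S w w = - bf P w w by rewrite /S bfBm bf0m sub0r.
rewrite Sw nsqN qformE eS in hS.
have hb1 : - `|bf BX x u| <= bf BX x u by apply: lerNnormlW.
have hsx := nsq_ge0 x; have hsu := nsq_ge0 u.
have hB2 : cE BX * (t0 * nsq x + nsq u / t0) <= c1 * (t0 * nsq x + nsq u / t0).
  apply: ler_wpM2r; last by rewrite /c1 lerDl.
  by apply: addr_ge0; [apply: mulr_ge0 => //; exact: ltW|apply: divr_ge0 => //; exact: ltW].
have F2 : c1 * (t0 * nsq x + nsq u / t0) = lam / 2 * nsq x + Kc * nsq u.
  by rewrite /t0 /Kc; field; rewrite !gt_eqF.
have F6 : (Kc + c2) * nsq u <= (Kc + c2) * (tau * - bf P w w).
  by apply: ler_wpM2l; [exact: addr_ge0|exact: hS].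
rewrite hv hN -/c2 in hQ *.
rewrite -/c2 in hQ.
rewrite qformE in hA.
lra.
Qed.
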